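(* Let $L\ge 1$ and, for each layer $\ell\in\{1,\dots,L\}$, let $K^{\ell}\ge 1$ and $d^{\ell}\ge 1$ be integers and $a^{\ell}$ a real number with $0\le a^{\ell}<1$. Consider the linear one-dimensional network on real sequences indexed by $\mathbb{Z}$ whose $\ell$-th layer maps $y^{\ell-1}$ to $y^{\ell}$ via $$y^{\ell}_i - a^{\ell}\, y^{\ell}_{i-1} = \sum_{p=0}^{K^{\ell}-1} \frac{1-a^{\ell}}{K^{\ell}}\, y^{\ell-1}_{i-d^{\ell}p}\qquad\text{for all } i\in\mathbb{Z}$$ (i.e. uniform moving-average coefficients of length $K^{\ell}$ with dilation $d^{\ell}$, and autoregressive coefficients $1,-a^{\ell}$), where $y^0$ is the network input and $y^L$ its output. Then the radius of the effective receptive field of this network satisfies $$r(\mathrm{ERF})^2 = \sum_{\ell=1}^{L}\left[\frac{(d^{\ell})^2\big((K^{\ell})^2-1\big)}{12} + \frac{a^{\ell}}{(1-a^{\ell})^2}\right].$$ In particular, when $a^{\ell}=0$ for all $\ell$ (so that each layer is an ordinary, possibly dilated, convolution), $r(\mathrm{ERF})^2=\sum_{\ell=1}^{L}(d^{\ell})^2\big((K^{\ell})^2-1\big)/12$.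
   Context: Each layer relation is interpreted as the linear map $y^{\ell}=f^{\ell}*y^{\ell-1}$, where $*$ is convolution of sequences on $\mathbb{Z}$ and $f^{\ell}=\tilde a^{\ell}*w^{\ell}$, with $w^{\ell}_{d^{\ell}p}=(1-a^{\ell})/K^{\ell}$ for $p=0,\dots,K^{\ell}-1$ (and $w^{\ell}_j=0$ otherwise) and $\tilde a^{\ell}_j=(a^{\ell})^j$ for $j\ge 0$, $\tilde a^{\ell}_j=0$ for $j<0$ (the inverse convolution of the autoregressive filter $(1,-a^{\ell})$, i.e. $y^{\ell}_i=\sum_{j\ge0}(a^{\ell})^j(w^{\ell}*y^{\ell-1})_{i-j}$). For this network the quantity $g(p)=\left|\partial y^{L}_i/\partial y^{0}_{i-p}\right|$ does not depend on $i$. The effective receptive field is the normalized distribution $\mathrm{ERF}(p)=g(p)/\sum_{q\in\mathbb{Z}} g(q)$, $p\in\mathbb{Z}$, and its radius $r(\mathrm{ERF})$ is defined by $r(\mathrm{ERF})^2=\sum_{p}p^2\,\mathrm{ERF}(p)-\big(\sum_p |p|\,\mathrm{ERF}(p)\big)^2$. *)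

(* Defs.v *)
From Stdlib Require Import Reals ZArith List.
From Coquelicot Require Import Coquelicot.
Open Scope R_scope.

Definition sumZ (u : Z -> R) : R :=
  Series (fun n : nat => u (Z.of_nat n)) +
  Series (fun n : nat => u (- Z.of_nat (S n))%Z).

Definition conv (f y : Z -> R) : Z -> R :=
  fun i => sumZ (fun j => f j * y (i - j)%Z).

(* Moving-average filter w: w_(d p) = (1-a)/K for p = 0..K-1, 0 otherwise. *)
Definition wfilt (K d : nat) (a : R) : Z -> R :=
  fun j => if ((0 <=? j)%Z && (Z.modulo j (Z.of_nat d) =? 0)%Z
               && (Z.div j (Z.of_nat d) <? Z.of_nat K)%Z)%bool
           then (1 - a) / INR K else 0.

(* Inverse of the autoregressive filter (1,-a): atilde_j = a^j (j >= 0), 0 (j < 0). *)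
Definition atilde (a : R) : Z -> R :=
  fun j => if (0 <=? j)%Z then a ^ (Z.to_nat j) else 0.

Definition layer_filter (K d : nat) (a : R) : Z -> R :=
  conv (atilde a) (wfilt K d a).

Fixpoint net (K d : nat -> nat) (a : nat -> R) (l : nat) (y : Z -> R) : Z -> R :=
  match l with
  | O => y
  | S l' => conv (layer_filter (K l) (d l) (a l)) (net K d a l' y)
  end.

Definition delta (k : Z) : Z -> R := fun i => if (i =? k)%Z then 1 else 0.

(* g(p) = |d y^L_i / d y^0_(i-p)| for the linear network, taken at i = 0:
   the partial derivative of a linear map is its response to a unit vector. *)
Definition gERF (K d : nat -> nat) (a : nat -> R) (L : nat) (p : Z) : R :=
  Rabs (net K d a L (delta (- p)%Z) 0%Z).

Definition ERF (K d : nat -> nat) (a : nat -> R) (L : nat) (p : Z) : R :=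
  gERF K d a L p / sumZ (gERF K d a L).

Definition radius_sq (K d : nat -> nat) (a : nat -> R) (L : nat) : R :=
  sumZ (fun p => (IZR p) ^ 2 * ERF K d a L p)
  - (sumZ (fun p => IZR (Z.abs p) * ERF K d a L p)) ^ 2.

(* Main.v *)
Require Import Defs.
From Stdlib Require Import Reals ZArith List Lia Lra FunctionalExtensionality.
From Coquelicot Require Import Coquelicot.
Open Scope R_scope.

Lemma isP a b la lb : is_series a la -> is_series b lb -> is_series (fun n => a n + b n) (la + lb).
Proof. intros H H0. exact (is_series_plus _ _ _ _ H H0). Qed.
Lemma isS c a la : is_series a la -> is_series (fun n => c * a n) (c * la).
Proof. intros H. exact (is_series_scal _ _ _ H). Qed.
Lemma isE (a b : nat -> R) (l l' : R) : (forall n, a n = b n) -> l = l' -> is_series a l -> is_series b l'.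
Proof. intros H e H1; subst; exact (is_series_ext _ _ _ H H1). Qed.

Lemma sum_zero f N : (forall i, (i <= N)%nat -> f i = 0) -> sum_f_R0 f N = 0.
Proof. induction N; intros H; simpl. apply H; lia. rewrite IHN by (intros; apply H; lia). rewrite H by lia. ring. Qed.

Lemma sum_stable f N n : (N <= n)%nat -> (forall i, (N < i)%nat -> f i = 0) -> sum_f_R0 f n = sum_f_R0 f N.
Proof. intros Hle Hz; induction Hle; auto. simpl. rewrite IHHle. rewrite Hz by lia. ring. Qed.

Lemma series_finite u N : (forall n, (N < n)%nat -> u n = 0) -> is_series u (sum_f_R0 u N).
Proof.
  intros H. apply is_series_Reals. intros eps He. exists N. intros n Hn.
  rewrite (sum_stable u N n) by (auto; lia). unfold R_dist. rewrite Rminus_diag, Rabs_R0. lra.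
Qed.

Lemma Series_zero : Series (fun _ : nat => 0) = 0.
Proof. apply is_series_unique. pose proof (series_finite (fun _ => 0) 0 (fun _ _ => eq_refl)) as H.
  exact H. Qed.

Definition cauchy (u v : nat -> R) (n : nat) := sum_f_R0 (fun k => u k * v (n - k)%nat) n.

Definition good (u : nat -> R) (m0 m1 m2 : R) :=
  (forall n, 0 <= u n) /\ is_series u m0 /\ is_series (fun n => INR n * u n) m1
  /\ is_series (fun n => INR n ^ 2 * u n) m2.

Lemma good_eq u x y z x' y' z' : x = x' -> y = y' -> z = z' -> good u x y z -> good u x' y' z'.
Proof. intros; subst; auto. Qed.

Lemma mult_pos a b la lb : is_series a la -> is_series b lb -> (forall n, 0 <= a n) -> (forall n, 0 <= b n) ->
  is_series (cauchy a b) (la * lb).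
Proof. intros; apply is_series_mult_pos; auto. Qed.

Lemma good_mult u v m0 m1 m2 p0 p1 p2 : good u m0 m1 m2 -> good v p0 p1 p2 ->
  good (cauchy u v) (m0*p0) (m1*p0 + m0*p1) (m2*p0 + 2*(m1*p1) + m0*p2).
Proof.
  intros (Hu & U0 & U1 & U2) (Hv & V0 & V1 & V2).
  assert (Hu1 : forall n, 0 <= INR n * u n) by (intros; apply Rmult_le_pos; auto using pos_INR).
  assert (Hv1 : forall n, 0 <= INR n * v n) by (intros; apply Rmult_le_pos; auto using pos_INR).
  assert (Hu2 : forall n, 0 <= INR n ^2 * u n) by (intros; apply Rmult_le_pos; auto using pos_INR; apply pow2_ge_0).
  assert (Hv2 : forall n, 0 <= INR n ^2 * v n) by (intros; apply Rmult_le_pos; auto using pos_INR; apply pow2_ge_0).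
  split; [|split; [|split]].
  - intros n; unfold cauchy; apply cond_pos_sum; intros; apply Rmult_le_pos; auto.
  - apply mult_pos; auto.
  - eapply isE; [| reflexivity |].
    2: { apply isP; [apply (mult_pos _ _ _ _ U1 V0) | apply (mult_pos _ _ _ _ U0 V1)]; auto. }
    intros n; unfold cauchy. rewrite <- plus_sum, scal_sum. apply sum_eq. intros i Hi.
    rewrite minus_INR by auto. ring.
  - eapply isE; [| reflexivity |].
    2: { apply isP; [apply isP|]. apply (mult_pos _ _ _ _ U2 V0); auto.
         apply isS. apply (mult_pos _ _ _ _ U1 V1); auto. apply (mult_pos _ _ _ _ U0 V2); auto. }
    intros n; unfold cauchy. rewrite scal_sum, <- !plus_sum, scal_sum. apply sum_eq. intros i Hi.
    rewrite minus_INR by auto. ring.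
Qed.
Lemma sumk n : sum_f_R0 (fun k => INR k + 1) n = (INR n + 1)*(INR n + 2)/2.
Proof. induction n. simpl; lra. rewrite tech5, IHn, S_INR. field. Qed.

Lemma good_geom a : 0 <= a < 1 ->
  good (fun n => a ^ n) (/(1-a)) (/(1-a) * /(1-a) - /(1-a))
       (2*(/(1-a) * /(1-a) * /(1-a)) - 3*(/(1-a) * /(1-a)) + /(1-a)).
Proof.
  intros Ha.
  assert (Hg : forall n, 0 <= a ^ n) by (intros; apply pow_le; lra).
  assert (G0 : is_series (fun n => a ^ n) (/(1-a))) by (apply is_series_geom; rewrite Rabs_pos_eq; lra).
  assert (Egg : forall n, cauchy (fun n => a ^ n) (fun n => a ^ n) n = (INR n + 1) * a ^ n).
  { intros n; unfold cauchy. rewrite (sum_eq _ (fun _ => a ^ n)). rewrite sum_cte, S_INR; ring.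
    intros i Hi. rewrite <- pow_add. f_equal. lia. }
  assert (G1 := mult_pos _ _ _ _ G0 G0 Hg Hg).
  assert (Hgg : forall n, 0 <= cauchy (fun n => a ^ n) (fun n => a ^ n) n).
  { intros; rewrite Egg. apply Rmult_le_pos; auto. pose proof (pos_INR n); lra. }
  assert (G2 := mult_pos _ _ _ _ G1 G0 Hgg Hg).
  assert (Eggg : forall n, cauchy (cauchy (fun n => a ^ n) (fun n => a ^ n)) (fun n => a ^ n) n
                  = (INR n + 1)*(INR n + 2)/2 * a ^ n).
  { intros n; unfold cauchy at 1. rewrite (sum_eq _ (fun k => (INR k + 1) * a ^ n)).
    rewrite <- scal_sum, sumk. ring.
    intros i Hi. rewrite Egg, Rmult_assoc, <- pow_add. do 2 f_equal. lia. }
  split; [|split; [|split]]; auto.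
  - eapply isE; [ | | apply isP; [apply G1 | apply (isS (-1)); apply G0]].
    intros n. simpl. rewrite Egg. ring. ring.
  - eapply isE; [ | | apply isP; [apply isP; [apply (isS 2); apply G2 | apply (isS (-3)); apply G1] | apply G0]].
    intros n. simpl. rewrite Eggg, Egg. field. ring.
Qed.
Lemma point_series f m : (forall n, n <> m -> f n = 0) -> is_series f (f m).
Proof.
  intros H. replace (f m) with (sum_f_R0 f m).
  apply series_finite. intros; apply H; lia.
  destruct m. reflexivity. rewrite tech5, sum_zero. ring. intros; apply H; lia.
Qed.

Definition wn (K d : nat) (c : R) (n : nat) : R :=
  if (Nat.eqb (n mod d) 0 && Nat.ltb (n / d) K)%bool then c else 0.

Fixpoint Sj (d j K : nat) : R :=
  match K with O => 0 | S K' => Sj d j K' + (INR d * INR K') ^ j end.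

Lemma wn_S K d c n : (1 <= d)%nat ->
  wn (S K) d c n = wn K d c n + (if Nat.eqb n (d*K) then c else 0).
Proof.
  intros Hd. unfold wn.
  destruct (Nat.eqb_spec n (d*K)) as [->|Hn].
  - rewrite Nat.mul_comm, Nat.Div0.mod_mul, Nat.div_mul by lia.
    rewrite Nat.eqb_refl, Nat.ltb_irrefl.
    replace (K <? S K)%nat with true by (symmetry; apply Nat.ltb_lt; lia). simpl; ring.
  - pose proof (Nat.div_mod n d) as E. pose proof (Nat.mod_bound_pos n d).
    destruct (Nat.eqb_spec (n mod d) 0) as [Hr|Hr]; simpl; [|ring].
    destruct (Nat.ltb_spec (n / d) (S K)); destruct (Nat.ltb_spec (n / d) K); try ring.
    exfalso. assert ((n / d)%nat = K) as Hq by lia. rewrite Hq, Hr in E. lia. lia.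
Qed.

Lemma w_series j K d c : (1 <= d)%nat ->
  is_series (fun n => INR n ^ j * wn K d c n) (c * Sj d j K).
Proof.
  intros Hd. induction K.
  - simpl. eapply isE; [ | | apply (series_finite (fun _ => 0) 0); auto].
    intros n; unfold wn. replace (n / d <? 0)%nat with false by (symmetry; apply Nat.ltb_ge; lia).
    rewrite Bool.andb_false_r. ring. simpl; ring.
  - eapply isE; [ | | apply isP; [apply IHK | apply (point_series (fun n => INR n ^ j * (if Nat.eqb n (d*K) then c else 0)) (d*K))]].
    intros n; simpl. rewrite wn_S by auto. ring.
    simpl. rewrite Nat.eqb_refl, mult_INR. ring.
    intros n Hn. destruct (Nat.eqb_spec n (d*K)); [lia|ring].
Qed.

Lemma Sj0 d K : Sj d 0 K = INR K.
Proof. induction K; simpl Sj. reflexivity. rewrite IHK, S_INR; ring. Qed.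
Lemma Sj1 d K : Sj d 1 K = INR d * INR K * (INR K - 1) / 2.
Proof. induction K; simpl Sj. simpl; field. rewrite IHK, S_INR; field. Qed.
Lemma Sj2 d K : Sj d 2 K = INR d ^ 2 * (INR K - 1) * INR K * (2 * INR K - 1) / 6.
Proof. induction K; simpl Sj. simpl; field. rewrite IHK, S_INR; field. Qed.

Lemma good_w K d c : (1 <= d)%nat -> 0 <= c ->
  good (wn K d c) (c * INR K) (c * (INR d * INR K * (INR K - 1) / 2))
    (c * (INR d ^ 2 * (INR K - 1) * INR K * (2 * INR K - 1) / 6)).
Proof.
  intros Hd Hc. apply (good_eq _ (c * Sj d 0 K) (c * Sj d 1 K) (c * Sj d 2 K)); [now rewrite Sj0 | now rewrite Sj1 | now rewrite Sj2 |].
  split; [|split; [|split]].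
  - intros n; unfold wn; destruct (_ && _)%bool; lra.
  - eapply isE; [ | | apply (w_series 0)]; auto. intros; simpl; ring.
  - eapply isE; [ | | apply (w_series 1)]; auto. intros; simpl; ring.
  - eapply isE; [ | | apply (w_series 2)]; auto.
Qed.
Definition lift (v : nat -> R) : Z -> R := fun z => if (0 <=? z)%Z then v (Z.to_nat z) else 0.

Lemma lift_nat v n : lift v (Z.of_nat n) = v n.
Proof. unfold lift. replace (0 <=? Z.of_nat n)%Z with true by (symmetry; apply Z.leb_le; lia).
  now rewrite Nat2Z.id. Qed.

Lemma lift_neg v z : (z < 0)%Z -> lift v z = 0.
Proof. intros H; unfold lift. replace (0 <=? z)%Z with false by (symmetry; apply Z.leb_gt; lia). auto. Qed.

Lemma conv_lift u v : conv (lift u) (lift v) = lift (cauchy u v).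
Proof.
  apply functional_extensionality. intros z. unfold conv, sumZ.
  match goal with |- context [Series ?f + Series ?g] => rewrite (Series_ext g (fun _ => 0)) end.
  rewrite Series_zero, Rplus_0_r.
  2: { intros n. rewrite lift_neg by lia. ring. }
  destruct (Z_lt_le_dec z 0) as [Hz|Hz].
  - rewrite (Series_ext _ (fun _ => 0)), Series_zero. rewrite lift_neg; auto.
    intros n. rewrite (lift_neg v) by lia. ring.
  - rewrite <- (Z2Nat.id z Hz). set (m := Z.to_nat z). rewrite lift_nat.
    apply is_series_unique.
    eapply isE; [ | | apply (series_finite _ m)]. intros; reflexivity.
    unfold cauchy. apply sum_eq. intros i Hi. rewrite lift_nat.
    rewrite <- Nat2Z.inj_sub by lia. now rewrite lift_nat.
    intros n Hn. cbv beta. rewrite (lift_neg v) by lia. ring.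
Qed.

Definition geom (a : R) (n : nat) := a ^ n.

Lemma atilde_lift a : atilde a = lift (geom a).
Proof. reflexivity. Qed.

Lemma wfilt_lift K d a : (1 <= d)%nat -> wfilt K d a = lift (wn K d ((1 - a) / INR K)).
Proof.
  intros Hd. apply functional_extensionality. intros z. unfold wfilt, lift, wn.
  destruct (Z.leb_spec 0 z) as [Hz|Hz]; simpl; [|reflexivity].
  rewrite <- (Z2Nat.id z Hz) at 1 2. set (m := Z.to_nat z).
  rewrite <- Nat2Z.inj_mod, <- Nat2Z.inj_div.
  destruct (Nat.eqb_spec (m mod d) 0) as [H1|H1]; destruct (Z.eqb_spec (Z.of_nat (m mod d)) 0) as [H2|H2];
    try lia; simpl; auto.
  destruct (Nat.ltb_spec (m / d) K); destruct (Z.ltb_spec (Z.of_nat (m / d)) (Z.of_nat K)); lia || auto.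
Qed.
Definition fl (K d : nat -> nat) (a : nat -> R) (l : nat) : nat -> R :=
  cauchy (geom (a l)) (wn (K l) (d l) ((1 - a l) / INR (K l))).

Fixpoint Fn (K d : nat -> nat) (a : nat -> R) (l : nat) : nat -> R :=
  match l with
  | O => fun n => if Nat.eqb n 0 then 1 else 0
  | S l' => cauchy (fl K d a (S l')) (Fn K d a l')
  end.

Lemma net_delta L K d a (Hd : forall l, (1 <= l <= L)%nat -> (1 <= d l)%nat) :
  forall l, (l <= L)%nat -> forall k i, net K d a l (delta k) i = lift (Fn K d a l) (i - k).
Proof.
  induction l; intros Hl k i.
  - simpl. unfold delta, lift. destruct (Z.eqb_spec i k) as [->|Hik].
    + rewrite Z.sub_diag. reflexivity.
    + destruct (Z.leb_spec 0 (i - k)); auto.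
      replace (Z.to_nat (i - k) =? 0)%nat with false; auto. symmetry; apply Nat.eqb_neq; lia.
  - change (net K d a (S l) (delta k)) with
      (conv (layer_filter (K (S l)) (d (S l)) (a (S l))) (net K d a l (delta k))).
    unfold layer_filter. rewrite atilde_lift, wfilt_lift, conv_lift by (apply Hd; lia).
    replace (net K d a l (delta k)) with (fun z => lift (Fn K d a l) (z - k)).
    2: { apply functional_extensionality; intros z; rewrite IHl by lia; auto. }
    simpl Fn. rewrite <- (conv_lift (fl K d a (S l)) (Fn K d a l)). unfold fl at 1. unfold conv, sumZ. f_equal; apply Series_ext; intros n;
      f_equal; f_equal; ring.
Qed.

Lemma fold_shift (l : list R) x : fold_right Rplus x l = fold_right Rplus 0 l + x.
Proof. induction l; simpl. ring. rewrite IHl; ring. Qed.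

Lemma fold_S (g : nat -> R) l :
  fold_right Rplus 0 (map g (seq 1 (S l))) = fold_right Rplus 0 (map g (seq 1 l)) + g (S l).
Proof. rewrite seq_S, map_app, fold_right_app. simpl. rewrite fold_shift. f_equal. ring. Qed.

Definition gl (K d : nat -> nat) (a : nat -> R) (l : nat) : R :=
  (INR (d l)) ^ 2 * ((INR (K l)) ^ 2 - 1) / 12 + a l / (1 - a l) ^ 2.

Lemma good_fl K d a l : (1 <= K l)%nat -> (1 <= d l)%nat -> 0 <= a l < 1 ->
  exists mu, good (fl K d a l) 1 mu (mu ^ 2 + gl K d a l).
Proof.
  intros HK Hd Ha.
  assert (HKr : 1 <= INR (K l)) by (apply (le_INR 1); auto).
  assert (Hc : 0 <= (1 - a l) / INR (K l)) by (apply Rdiv_le_0_compat; lra).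
  pose proof (good_mult _ _ _ _ _ _ _ _ (good_geom (a l) Ha) (good_w (K l) (d l) _ Hd Hc)) as G.
  eexists. unfold fl. eapply good_eq; [ | reflexivity | | exact G]; unfold gl.
  - field. split; lra.
  - field. split; lra.
Qed.

Lemma good_Fn L K d a
  (HK : forall l, (1 <= l <= L)%nat -> (1 <= K l)%nat)
  (Hd : forall l, (1 <= l <= L)%nat -> (1 <= d l)%nat)
  (Ha : forall l, (1 <= l <= L)%nat -> 0 <= a l < 1) :
  forall l, (l <= L)%nat -> exists m1, good (Fn K d a l) 1 m1
      (m1 ^ 2 + fold_right Rplus 0 (map (gl K d a) (seq 1 l))).
Proof.
  induction l; intros Hl.
  - exists 0. simpl. split; [|split; [|split]].
    + intros n; destruct (n =? 0)%nat; lra.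
    + eapply isE; [ | | apply (point_series _ 0)]. intros; reflexivity. reflexivity.
      intros n Hn; cbv beta; replace (n =? 0)%nat with false by (symmetry; apply Nat.eqb_neq; lia); ring.
    + eapply isE; [ | | apply (point_series (fun n => INR n * (if (n =? 0)%nat then 1 else 0)) 0)].
      intros; reflexivity. simpl; ring. intros n Hn; cbv beta; replace (n =? 0)%nat with false by (symmetry; apply Nat.eqb_neq; lia); ring.
    + eapply isE; [ | | apply (point_series (fun n => INR n ^ 2 * (if (n =? 0)%nat then 1 else 0)) 0)].
      intros; reflexivity. simpl; ring. intros n Hn; cbv beta; replace (n =? 0)%nat with false by (symmetry; apply Nat.eqb_neq; lia); ring.
  - destruct (IHl ltac:(lia)) as [m1 G1].
    destruct (good_fl K d a (S l)) as [mu G2]; [apply HK; lia | apply Hd; lia | apply Ha; lia |].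
    exists (mu + m1). simpl Fn. rewrite fold_S.
    eapply good_eq; [ | | | exact (good_mult _ _ _ _ _ _ _ _ G2 G1)]; ring.
Qed.

Lemma sumZ_lift (w : Z -> R) F : sumZ (fun p => w p * lift F p) = Series (fun n => w (Z.of_nat n) * F n).
Proof.
  unfold sumZ. rewrite (Series_ext (fun n => w (- Z.of_nat (S n))%Z * lift F (- Z.of_nat (S n))%Z) (fun _ => 0)).
  rewrite Series_zero, Rplus_0_r. apply Series_ext. intros; now rewrite lift_nat.
  intros; rewrite lift_neg by lia; ring.
Qed.

Theorem theorem1 (L : nat) (K d : nat -> nat) (a : nat -> R)
  (HL : (1 <= L)%nat)
  (HK : forall l, (1 <= l <= L)%nat -> (1 <= K l)%nat)
  (Hd : forall l, (1 <= l <= L)%nat -> (1 <= d l)%nat)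
  (Ha : forall l, (1 <= l <= L)%nat -> 0 <= a l < 1) :
  radius_sq K d a L =
  fold_right Rplus 0
    (map (fun l => (INR (d l)) ^ 2 * ((INR (K l)) ^ 2 - 1) / 12
                   + a l / (1 - a l) ^ 2) (seq 1 L)).
Proof.
  destruct (good_Fn L K d a HK Hd Ha L (le_n L)) as [m1 (Hpos & G0 & G1 & G2)].
  set (F := Fn K d a L) in *.
  assert (gE : gERF K d a L = lift F).
  { apply functional_extensionality; intros p. unfold gERF.
    rewrite (net_delta L) by auto. replace (0 - - p)%Z with p by ring.
    apply Rabs_pos_eq. unfold lift. destruct (0 <=? p)%Z; [apply Hpos | lra]. }
  assert (S0 : sumZ (gERF K d a L) = 1).
  { rewrite gE. transitivity (sumZ (fun p => 1 * lift F p)).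
    f_equal; apply functional_extensionality; intros; ring.
    rewrite sumZ_lift. apply is_series_unique. eapply isE; [ | | exact G0]; auto. intros; ring. }
  unfold radius_sq, ERF. rewrite S0, gE.
  transitivity (sumZ (fun p => IZR p ^ 2 * lift F p) - (sumZ (fun p => IZR (Z.abs p) * lift F p)) ^ 2).
  { f_equal; [|f_equal]; f_equal; apply functional_extensionality; intros; field. }
  rewrite !sumZ_lift.
  rewrite (is_series_unique _ (m1 ^ 2 + fold_right Rplus 0 (map (gl K d a) (seq 1 L)))).
  rewrite (is_series_unique _ m1). unfold gl; ring.
  eapply isE; [ | | exact G1]; auto. intros n; rewrite Z.abs_eq by lia; now rewrite <- INR_IZR_INZ.
  eapply isE; [ | | exact G2]; auto. intros n; now rewrite <- INR_IZR_INZ.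
Qed.
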